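(* For $D,F\in\mathbb{R}$ let $S_{D,F}$ denote the system $\dot x=-y+xy$, $\dot y=x+Dx^2+Fy^2$. Let $D\in(-1,0)$. Then the period function of the center $(-1/D,0)$ of $S_{D,F}$ behaves as the period function of the center at the origin of $S_{-D-1,F}$: precisely, the change of variables $u=(Dx+1)/(D+1)$, $v=\sqrt{-D/(D+1)}\,y$ maps the periodic orbits around $(-1/D,0)$ of $S_{D,F}$ onto the periodic orbits around the origin of $S_{-D-1,F}$, and the minimal period of each such orbit of $S_{D,F}$ equals $\sqrt{-D/(D+1)}$ times the minimal period of the corresponding orbit of $S_{-D-1,F}$.
   Context: The period function of a center assigns to each periodic orbit in its period annulus (the largest punctured neighborhood of the center foliated by periodic orbits) its minimal period. *)

(* Defs.v *)
From HB Require Import structures.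
From mathcomp Require Import all_boot all_order all_algebra.
From mathcomp Require Import all_classical all_reals all_analysis.
Set Implicit Arguments. Unset Strict Implicit. Unset Printing Implicit Defensive.
Import Order.TTheory GRing.Theory Num.Theory.
Import numFieldNormedType.Exports.
Local Open Scope classical_set_scope.
Local Open Scope ring_scope.

Definition vfield {R : realType} (D F : R) (p : R * R) : R * R :=
  (- p.2 + p.1 * p.2, p.1 + D * p.1 ^+ 2 + F * p.2 ^+ 2).

Definition is_solution {R : realType} (D F : R) (phi : R -> R * R) : Prop :=
  forall t : R,
    is_derive t 1 (fun s => (phi s).1) (vfield D F (phi t)).1 /\
    is_derive t 1 (fun s => (phi s).2) (vfield D F (phi t)).2.

Definition is_min_period {R : realType} (D F : R) (p : R * R) (T : R) : Prop :=
  0 < T /\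
  exists phi, [/\ is_solution D F phi, phi 0 = p, phi T = p &
                  forall s, 0 < s < T -> phi s <> p].

Definition sys_orbit {R : realType} (D F : R) (p : R * R) : set (R * R) :=
  [set q | exists phi, [/\ is_solution D F phi, phi 0 = p & exists t, phi t = q]].

Definition foliated_punctured_nbhd {R : realType} (D F : R) (c : R * R)
    (P : set (R * R)) : Prop :=
  [/\ ~ P c, open (P `|` [set c]), connected (P `|` [set c]) &
      forall p, P p -> (exists T, is_min_period D F p T) /\ sys_orbit D F p `<=` P].

(* The period annulus of c: the largest such set (the union of all of them). *)
Definition period_annulus {R : realType} (D F : R) (c : R * R) : set (R * R) :=
  [set p | exists P, foliated_punctured_nbhd D F c P /\ P p].

(* Main.v *)
Require Import Defs.
From HB Require Import structures.
From mathcomp Require Import all_boot all_order all_algebra.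
From mathcomp Require Import all_classical all_reals all_analysis.
From mathcomp Require Import ring lra.
Import Order.TTheory GRing.Theory Num.Theory.
Import numFieldNormedType.Exports.
Local Open Scope classical_set_scope.
Local Open Scope ring_scope.

Lemma cont_aff {R : realType} (a b c : R) :
  continuous (fun p : R * R => (a * p.1 + b, c * p.2)).
Proof.
move=> p; apply: (@cvg_pair _ _ _ (nbhs p) (nbhs (a * p.1 + b)) (nbhs (c * p.2))) => /=.
  apply: cvgD; last exact: cvg_cst.
  apply: cvgM; first exact: cvg_cst.
  exact: cvg_fst.
apply: cvgM; first exact: cvg_cst.
exact: cvg_snd.
Qed.

Lemma der_aff {R : realType} (f : R -> R) (a b s t d : R) :
  is_derive (s * t) 1 f d ->
  is_derive t 1 (fun u => a * f (s * u) + b) (s * a * d).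
Proof.
move=> fd.
have hs : is_derive t 1 (fun u : R => s * u) s.
  have := is_deriveZ s (@is_derive_id _ _ t 1).
  by move/is_derive_eq; apply; rewrite /GRing.scale /= mulr1.
have hl : forall y : R, is_derive y 1 (fun z : R => a * z + b) a.
  move=> y.
  have := is_deriveD (is_deriveZ a (@is_derive_id _ _ y 1)) (@is_derive_cst _ _ _ b y 1).
  by move/is_derive_eq; apply; rewrite /GRing.scale /= mulr1 addr0.
have := is_derive1_comp (hl (f (s * t))) (is_derive1_comp fd hs).
rewrite /comp => h.
by apply: is_derive_eq h _; ring.
Qed.

Lemma sol_aff {R : realType} (D1 D2 F a b c s : R) (phi : R -> R * R) :
  (forall p, s * a * (vfield D1 F p).1 = (vfield D2 F (a * p.1 + b, c * p.2)).1) ->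
  (forall p, s * c * (vfield D1 F p).2 = (vfield D2 F (a * p.1 + b, c * p.2)).2) ->
  is_solution D1 F phi ->
  is_solution D2 F (fun t => (a * (phi (s * t)).1 + b, c * (phi (s * t)).2)).
Proof.
move=> h1 h2 sol t; have [d1 d2] := sol (s * t); split => /=.
  by have := @der_aff _ _ a b _ _ _ d1; rewrite h1.
have := @der_aff _ _ c 0 _ _ _ d2; rewrite h2.
have -> : (fun u => c * (phi (s * u)).2 + 0) = (fun u => c * (phi (s * u)).2).
  by apply: funext => u; rewrite addr0.
by [].
Qed.

Definition conj_data {R : realType} (D1 D2 F : R) (G H : R * R -> R * R) (s : R) :=
  [/\ 0 < s, cancel G H, cancel H G, continuous G & continuous H] /\
  (forall phi, is_solution D1 F phi -> is_solution D2 F (fun t => G (phi (s * t)))) /\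
  (forall psi, is_solution D2 F psi -> is_solution D1 F (fun t => H (psi (s^-1 * t)))).

Lemma conj_sym {R : realType} {D1 D2 F : R} {G H s} :
  conj_data D1 D2 F G H s -> conj_data D2 D1 F H G s^-1.
Proof.
move=> [[s0 GH HG cG cH] [sG sH]]; split; first by split; rewrite ?invr_gt0.
by split => // phi; rewrite invrK; exact: sG.
Qed.

Lemma orbit_sub {R : realType} {D1 D2 F : R} {G H s p} :
  conj_data D1 D2 F G H s ->
  G @` sys_orbit D1 F p `<=` sys_orbit D2 F (G p).
Proof.
move=> [[s0 GH HG cG cH] [solG solH]] _ [q [phi [sol ph0 [t pht]]] <-].
exists (fun u => G (phi (s * u))); split; first exact: solG.
  by rewrite mulr0 ph0.
exists (s^-1 * t); by rewrite mulrA mulfV ?mul1r ?pht // gt_eqF.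
Qed.

Lemma orbit_eq {R : realType} {D1 D2 F : R} {G H s p} :
  conj_data D1 D2 F G H s ->
  G @` sys_orbit D1 F p = sys_orbit D2 F (G p).
Proof.
move=> cd; apply/seteqP; split; first exact: orbit_sub cd.
move=> q hq.
have h2 := orbit_sub (p := G p) (conj_sym cd).
have [[_ GH HG _ _] _] := cd.
rewrite GH in h2.
exists (H q); last by rewrite HG.
by apply: h2; exists q.
Qed.

Lemma minper1 {R : realType} {D1 D2 F : R} {G H s p T} :
  conj_data D1 D2 F G H s ->
  is_min_period D1 F p (s * T) -> is_min_period D2 F (G p) T.
Proof.
move=> [[s0 GH HG _ _] [solG _]] [sT0 [phi [sol ph0 phT nr]]].
split; first by rewrite -(pmulr_rgt0 _ s0).
exists (fun u => G (phi (s * u))); split => //.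
- exact: solG.
- by rewrite mulr0 ph0.
- by rewrite phT.
move=> u /andP[u0 uT] /(can_inj GH) e.
apply: (nr (s * u)) => //.
by rewrite mulr_gt0 //= ltr_pM2l.
Qed.

Lemma minper_iff {R : realType} {D1 D2 F : R} {G H s p T} :
  conj_data D1 D2 F G H s ->
  is_min_period D2 F (G p) T <-> is_min_period D1 F p (s * T).
Proof.
move=> cd; split; last exact: minper1 cd.
have := minper1 (p := G p) (T := s * T) (conj_sym cd).
have [[s0 GH _ _ _] _] := cd.
by rewrite GH mulrA mulVf ?mul1r // gt_eqF.
Qed.

Lemma fol {R : realType} {D1 D2 F : R} {G H s c P} :
  conj_data D1 D2 F G H s ->
  foliated_punctured_nbhd D1 F c P ->
  foliated_punctured_nbhd D2 F (G c) (G @` P).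
Proof.
move=> cd [nPc oP cP hP].
have [[s0 GH HG cG cH] _] := cd.
have e1 : G @` P `|` [set G c] = H @^-1` (P `|` [set c]).
  apply/seteqP; split => x /=.
    case=> [[y Py <-]|->]; rewrite GH; by [left|right].
  case=> [Px|ex]; [left; exists (H x) => //; exact: HG|right].
  by rewrite -ex HG.
have e2 : G @` P `|` [set G c] = G @` (P `|` [set c]).
  by rewrite image_setU image_set1.
split.
- by move=> [x Px /(can_inj GH) ex]; apply: nPc; rewrite -ex.
- rewrite e1; apply: open_comp => // x _; exact: cH.
- rewrite e2; apply: connected_continuous_connected => //.
  exact: continuous_subspaceT.
move=> q [x Px <-]; have [[T1 hT] horb] := hP x Px; split.
  exists (s^-1 * T1); apply: minper1 cd _.
  by rewrite mulrA mulfV ?mul1r // gt_eqF.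
rewrite -(orbit_eq cd) => _ [y oy <-]; exists y => //; exact: horb.
Qed.

Lemma ann {R : realType} {D1 D2 F : R} {G H s c p} :
  conj_data D1 D2 F G H s ->
  period_annulus D1 F c p -> period_annulus D2 F (G c) (G p).
Proof.
move=> cd [P [fP Pp]]; exists (G @` P); split; [exact: fol cd fP | by exists p].
Qed.

Ltac fld := field; repeat (apply/andP; split); try assumption.

Theorem corollary3p3 (R : realType) (D F : R) :
  -1 < D < 0 ->
  let k := Num.sqrt (- D / (D + 1)) in
  let Phi := fun p : R * R => ((D * p.1 + 1) / (D + 1), k * p.2) in
  (forall p, period_annulus D F (- 1 / D, 0) p <->
             period_annulus (- D - 1) F (0, 0) (Phi p)) /\
  (forall q, period_annulus (- D - 1) F (0, 0) q ->
             exists p, period_annulus D F (- 1 / D, 0) p /\ Phi p = q) /\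
  (forall p, period_annulus D F (- 1 / D, 0) p ->
     Phi @` (sys_orbit D F p) = sys_orbit (- D - 1) F (Phi p) /\
     forall T, is_min_period (- D - 1) F (Phi p) T <-> is_min_period D F p (k * T)).
Proof.
move=> /andP[D1 D0] k Phi.
have D0' : D != 0 by rewrite lt_eqF.
have D1' : D + 1 != 0 by rewrite gt_eqF // -ltrBlDr sub0r.
have K0 : 0 < - D / (D + 1).
  by rewrite divr_gt0 // ?oppr_gt0 // -ltrBlDr sub0r.
have k0 : 0 < k by rewrite sqrtr_gt0.
have k0' : k != 0 by rewrite gt_eqF.
have kk : k ^+ 2 = - D / (D + 1) by rewrite sqr_sqrtr // ltW.
pose H := fun q : R * R => ((D + 1) / D * q.1 + - 1 / D, k^-1 * q.2).
have ePhi : Phi = fun p => (D / (D + 1) * p.1 + 1 / (D + 1), k * p.2).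
  by apply: funext => -[x y]; rewrite /Phi /=; congr (_, _); fld.
have cd : conj_data D (- D - 1) F Phi H k.
  split; first split => //.
  - move=> [x y]; rewrite /H /Phi /=; congr (_, _); fld.
  - move=> [x y]; rewrite /H /Phi /=; congr (_, _); fld.
  - by rewrite ePhi; exact: cont_aff.
  - exact: cont_aff.
  split.
    move=> phi sol; rewrite ePhi.
    apply: sol_aff sol => -[x y] /=.
      by fld.
    by rewrite -expr2 exprMn kk; fld.
  move=> psi sol; rewrite /H.
  apply: sol_aff sol => -[x y] /=.
    by fld.
  by rewrite -expr2 exprMn exprVn kk; fld.
have Gc : Phi (- 1 / D, 0) = (0, 0).
  by rewrite /Phi /= mulr0; congr (_, _); fld.
have Hc : H (0, 0) = (- 1 / D, 0).
  by have [[_ GH _ _ _] _] := cd; rewrite -Gc GH.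
split.
  move=> p; split; first by rewrite -Gc; exact: ann cd.
  move/(ann (conj_sym cd)); rewrite Hc.
  by have [[_ GH _ _ _] _] := cd; rewrite GH.
split.
  move=> q /(ann (conj_sym cd)); rewrite Hc => h; exists (H q); split => //.
  by have [[_ _ HG _ _] _] := cd; rewrite HG.
move=> p _; split; first exact: orbit_eq cd.
move=> T; exact: minper_iff cd.
Qed.
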